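(* Let $n$ be large, let $k$ be an integer with $1\le k\le 0.5\log n$, let $d=2\log 2n$, $\xi=e^{1/3}\cdot 2\log 2n$, and $\alpha_i=\prod_{j=1}^{i}\bigl(1+\tfrac{1}{k-j}\bigr)$ for $0\le i\le k-1$ (so $\alpha_0=1$). Consider the clustering sequence described in the context. For every $1\le i\le k-1$, if $|\mathcal{C}_{i-1}|\le \xi\,\alpha_{i-1}\,n^{1-(i-1)/k}$, then $\Pr\bigl[|\mathcal{C}_i|\ge \xi\,\alpha_i\,n^{1-i/k}\bigr]<0.5$. Moreover, $\xi\,\alpha_{k-1}\,n^{1/k}=O(k n^{1/k}\log n)$.
   Context: Logarithms are base 2. There is a graph on $n$ nodes and a sequence of clusterings $\mathcal{C}_0,\mathcal{C}_1,\dots$, where each clustering is a set of disjoint sets (clusters) of nodes, $\mathcal{C}_0=\{\{v\}: v\in V\}$, and for $1\le i\le k-1$ the clustering $\mathcal{C}_i$ is obtained from $\mathcal{C}_{i-1}$ by including each cluster $C\in\mathcal{C}_{i-1}$ in $\mathcal{C}_i$ with probability $n^{-1/k}$, where the inclusion events of the clusters of $\mathcal{C}_{i-1}$ are $d$-wise independent (any $d$ of them are mutually independent), conditioned on $\mathcal{C}_{i-1}$. *)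

(* Defs.v *)
From HB Require Import structures.
From mathcomp Require Import all_boot all_order all_algebra.
From mathcomp Require Import all_classical all_reals all_analysis.
Set Implicit Arguments. Unset Strict Implicit. Unset Printing Implicit Defensive.
Import Order.TTheory GRing.Theory Num.Theory.
Local Open Scope ring_scope.
Local Open Scope classical_set_scope.

Definition log2 {R : realType} (x : R) : R := ln x / ln 2.

Definition dpar {R : realType} (n : nat) : R := 2 * log2 (2 * n%:R).

Definition xi {R : realType} (n : nat) : R := expR (3^-1) * (2 * log2 (2 * n%:R)).

Definition alpha {R : realType} (k i : nat) : R :=
  \prod_(1 <= j < i.+1) (1 + ((k - j)%:R)^-1).

Definition bound {R : realType} (n k i : nat) : R :=
  xi n * alpha k i * (n%:R `^ (1 - i%:R / k%:R)).

Definition clustering (n : nat) (C : {set {set 'I_n}}) : Prop :=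
  forall A B, A \in C -> B \in C -> A != B -> (A :&: B == finset.set0).

Definition dwise_indep {R : realType} {dT : measure_display} {T : measurableType dT}
  (P : probability T R) (n : nat) (C : {set {set 'I_n}}) (E : {set 'I_n} -> set T)
  (d : R) : Prop :=
  forall S : {set {set 'I_n}}, S \subset C -> (#|S|%:R <= d) ->
    P [set x | forall A, A \in S -> x \in E A] = (\prod_(A in S) fine (P (E A)))%:E.

Definition next_clustering {T : Type} (n : nat) (C : {set {set 'I_n}})
  (E : {set 'I_n} -> set T) (x : T) : {set {set 'I_n}} :=
  [set A in C | x \in E A].

(* Main.v *)
Require Import Defs.
From HB Require Import structures.
From mathcomp Require Import all_boot all_order all_algebra.
From mathcomp Require Import all_classical all_reals all_analysis.
From mathcomp Require Import measurable_realfun.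
From mathcomp Require Import ring lra.
From mathcomp Require Import zify.
Import Order.TTheory GRing.Theory Num.Theory.
Local Open Scope ring_scope.
Local Open Scope classical_set_scope.

Lemma markov_count d (T : measurableType d) (R : realType)
  (mu : {measure set T -> \bar R}) (I : finType) (J : {set I})
  (F : I -> set T) (G : set T) (c : R) :
  (forall i, i \in J -> measurable (F i)) -> measurable G -> 0 <= c ->
  (forall x, G x -> c <= \sum_(i in J) \1_(F i) x) ->
  (c%:E * mu G <= \sum_(i in J) mu (F i))%E.
Proof.
move=> mF mG c0 hc.
pose F' := fun i => if i \in J then F i else set0.
have mF' : forall i, measurable (F' i).
  by move=> i; rewrite /F'; case: ifPn => // /mF.
have -> : (\sum_(i in J) mu (F i) = \sum_i mu (F' i))%E.
  rewrite big_mkcond /=; apply: eq_bigr => i _; rewrite /F'.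
  by case: ifPn => // _; rewrite measure0.
have -> : mu G = (\int[mu]_(x in setT) (\1_G x)%:E)%E.
  by rewrite integral_indic // setIT.
have -> : (\sum_i mu (F' i) = \sum_i \int[mu]_(x in setT) (\1_(F' i) x)%:E)%E.
  by apply: eq_bigr => i _; rewrite integral_indic // setIT.
rewrite -ge0_integral_sum //; last first.
  by move=> i; apply/measurable_EFinP; apply: measurable_indic.
rewrite -ge0_integralZl_EFin //; last first.
  by apply/measurable_EFinP; apply: measurable_indic.
apply: ge0_le_integral => //.
- by move=> x _; rewrite -EFinM lee_fin mulr_ge0 // indic_ge0.
- apply/measurable_EFinP; apply: measurable_funM => //; exact: measurable_indic.
- by apply: emeasurable_sum => i; apply/measurable_EFinP; apply: measurable_indic.
move=> x _; rewrite -EFinM sumEFin lee_fin.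
have -> : \sum_i \1_(F' i) x = \sum_(i in J) \1_(F i) x :> R.
  rewrite [RHS]big_mkcond /=; apply: eq_bigr => i _; rewrite /F'.
  by case: ifPn => // _; rewrite indicE in_set0.
rewrite indicE; case: (boolP (x \in G)) => xG.
  by rewrite mulr1; apply: hc; rewrite -in_setE.
by rewrite mulr0 sumr_ge0 // => i _; rewrite indic_ge0.
Qed.

Lemma ffact_prod (R : realType) (m t : nat) :
  ((m ^_ t)%N%:R : R) = \prod_(j < t) ((m - j)%N%:R).
Proof.
elim: t => [|t IH]; first by rewrite ffactn0 big_ord0.
by rewrite ffactnSr natrM IH big_ord_recr.
Qed.

Lemma ffact_lb (R : realType) (X t : nat) (y : R) :
  t%:R <= y -> y <= X%:R ->
  \prod_(j < t) (y - j%:R) <= ((X ^_ t)%N%:R : R).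
Proof.
move=> ty yX; rewrite ffact_prod; apply: ler_prod => j _.
have jt : (j%:R : R) < t%:R by rewrite ltr_nat.
have jX : (j <= X)%N.
  by rewrite -(ler_nat R); apply: le_trans (ltW jt) (le_trans ty yX).
apply/andP; split; first by rewrite subr_ge0; apply: le_trans (ltW jt) ty.
by rewrite natrB // lerB.
Qed.

Lemma bernoulli_ineq (R : realType) (x : R) (t : nat) :
  0 <= x -> 1 + t%:R * x <= (1 + x) ^+ t.
Proof.
move=> x0; elim: t => [|t IH]; first by rewrite mul0r addr0 expr0.
rewrite exprS.
apply: le_trans (_ : (1 + x) * (1 + t%:R * x) <= _); last first.
  by rewrite ler_wpM2l // addr_ge0.
have h : 0 <= t%:R * x * x by rewrite mulr_ge0 // mulr_ge0.
rewrite -natr1; nra.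
Qed.

Lemma alpha_rec (R : realType) (k i : nat) :
  alpha (R:=R) k i.+1 = alpha k i * (1 + ((k - i.+1)%N%:R)^-1).
Proof. by rewrite /alpha big_nat_recr. Qed.

Lemma alpha_closed (R : realType) (k i : nat) :
  (i < k)%N -> alpha (R:=R) k i * (k - i)%N%:R = k%:R.
Proof.
elim: i => [|i IH] hik.
  by rewrite /alpha big_geq // mul1r subn0.
rewrite alpha_rec -mulrA.
have h : ((k - i.+1)%N%:R : R) != 0 by rewrite pnatr_eq0 -lt0n subn_gt0.
rewrite mulrDl mul1r mulVf // natr1 subnSK; last exact: ltnW.
by apply: IH; apply: ltnW.
Qed.

Lemma alpha_ge1 (R : realType) (k i : nat) : (i < k)%N -> 1 <= alpha (R:=R) k i.
Proof.
move=> hik.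
have h : (0 : R) < (k - i)%N%:R by rewrite ltr0n subn_gt0.
have := @alpha_closed R k i hik.
move=> e.
have : alpha (R:=R) k i = k%:R / (k - i)%N%:R by rewrite -e mulfK // gt_eqF.
move=> ->; rewrite ler_pdivlMr // mul1r ler_nat; exact: leq_subr.
Qed.

Lemma part1 (R : realType) (n k i : nat) (C : {set {set 'I_n}})
  (dT : measure_display) (T : measurableType dT) (P : probability T R)
  (E : {set 'I_n} -> set T) :
  (1 <= n)%N -> (1 <= k)%N -> (k%:R <= log2 (n%:R : R) / 2) ->
  (1 <= i)%N -> (i <= k - 1)%N ->
  (#|C|%:R <= bound (R:=R) n k i.-1) ->
  (forall A, A \in C -> measurable (E A)) ->
  (forall A, A \in C -> P (E A) = (n%:R `^ (- (k%:R)^-1))%:E) ->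
  dwise_indep P C E (dpar n) ->
  (P [set x | (bound (R:=R) n k i <= #|next_clustering C E x|%:R)%R] < (2^-1)%:E)%E.
Proof.
move=> hn hk hlog hi1 hik hC mE hP hind.
case: i hi1 hik hC => // i' _ hik hC /=.
have hik' : (i'.+1 < k)%N by clear -hik hk; lia.
set l := ln (2:R).
have l0 : 0 < l by apply: ln_gt0; lra.
set L := ln (n%:R : R).
have hn0 : (0 : R) < n%:R by rewrite ltr0n.
have hk0 : (0 : R) < k%:R by rewrite ltr0n.
have hkl : 2 * k%:R * l <= L.
  move: hlog; rewrite /log2 -/l -/L ler_pdivlMr // ler_pdivlMr //.
  by rewrite (mulrC 2).
have hLl : 2 * k%:R <= L / l by rewrite ler_pdivlMr.
have hlog2n : log2 (2 * n%:R : R) = 1 + L / l.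
  rewrite /log2 lnM ?posrE // -/l -/L mulrDl divff //; exact: lt0r_neq0.
set r := (k - i'.+1)%N.
have r1 : (1 <= r)%N by rewrite /r subn_gt0.
have hr0 : (0 : R) < r%:R by rewrite ltr0n.
have hrR : (r%:R : R) = k%:R - i'.+1%:R by rewrite natrB //; exact: ltnW.
set p := (n%:R : R) `^ (- (k%:R)^-1).
have p0 : 0 <= p by exact: powR_ge0.
set M := bound (R:=R) n k i'.
set δ := (r%:R : R)^-1.
have pw : (n%:R : R) `^ (1 - i'%:R / k%:R) * p = n%:R `^ (1 - i'.+1%:R / k%:R).
  have e : (1 - i'.+1%:R / k%:R : R) = (1 - i'%:R / k%:R) + - (k%:R)^-1.
    by rewrite -natr1 mulrDl; ring.
  rewrite e [RHS]powRD //; apply/implyP => _; exact: lt0r_neq0.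
have hb : bound (R:=R) n k i'.+1 = M * p * (1 + δ).
  by rewrite /M /bound alpha_rec -pw /δ /r; ring.
set μ := M * p.
have hμ : μ = xi n * alpha k i' * n%:R `^ (1 - i'.+1%:R / k%:R).
  by rewrite /μ /M /bound -pw; ring.
have hpow : (r%:R : R) <= n%:R `^ (1 - i'.+1%:R / k%:R).
  rewrite /powR ifF; last exact/negbTE/lt0r_neq0.
  have e1 : (1 - i'.+1%:R / k%:R : R) = r%:R / k%:R.
    by rewrite hrR mulrBl divff //; exact: lt0r_neq0.
  rewrite e1 -/L.
  have h2 : 2 * r%:R * l <= r%:R / k%:R * L.
    apply: le_trans (_ : r%:R / k%:R * (2 * k%:R * l) <= _); last first.
      by rewrite ler_wpM2l // divr_ge0 // ltW.
    have -> : r%:R / k%:R * (2 * k%:R * l) = 2 * r%:R * l :> R by field; exact: lt0r_neq0.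
    by [].
  apply: le_trans (_ : expR (2 * r%:R * l) <= _); last by rewrite ler_expR.
  have -> : (2 * r%:R * l : R) = (2 * r)%N%:R * l by rewrite natrM.
  rewrite expRM_natl /l lnK ?posrE // -natrX ler_nat.
  apply: leq_trans (ltnW (ltn_expl r (ltnSn 1))) _.
  by apply: leq_pexp2l => //; rewrite mul2n -addnn leq_addr.
set t := (2 * k + 1)%N.
have tR : (t%:R : R) = 2 * k%:R + 1 by rewrite /t natrD natrM.
have hxi : 2 * t%:R <= xi (R:=R) n.
  rewrite /xi hlog2n tR.
  have e3 : 1 <= expR (3^-1 : R).
    apply: le_trans (expR_ge1Dx _); rewrite lerDl; lra.
  have : 0 <= L / l by apply: le_trans hLl; lra.
  nra.
have ha : 1 <= alpha (R:=R) k i' by apply: alpha_ge1; exact: ltnW.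
have hμlb : 2 * t%:R * r%:R <= μ.
  have hxi0 : 0 <= xi (R:=R) n by apply: le_trans hxi; rewrite tR; lra.
  rewrite hμ; apply: ler_pM => //.
  apply: (le_trans hxi); rewrite -{1}(mulr1 (xi n)); exact: ler_wpM2l.
have hμδ : 2 * t%:R <= μ * δ.
  rewrite -ler_pdivrMr; last by rewrite invr_gt0.
  by rewrite /δ invrK.
have hμ0 : 0 <= μ by apply: le_trans hμlb; rewrite tR; nra.
have hδ0 : 0 <= δ by rewrite /δ invr_ge0 ltW.
have hbt : t%:R <= bound (R:=R) n k i'.+1.
  rewrite hb -/μ; rewrite tR in hμlb *.
  have : (1 : R) <= r%:R by rewrite ler1n.
  nra.
have htd : t%:R <= dpar (R:=R) n.
  rewrite /dpar hlog2n tR; have : 0 <= L / l by apply: le_trans hLl; lra.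
  lra.
set b := bound (R:=R) n k i'.+1.
set m := #|C|.
pose Fs := fun S : {set {set 'I_n}} => [set x | forall A, A \in S -> x \in E A].
have memF : forall (S : {set {set 'I_n}}) (x : T), S \subset C -> (x \in Fs S) = (S \subset next_clustering C E x).
  move=> S x SC; apply/idP/idP.
    rewrite in_setE /= => h; apply/fintype.subsetP => A AS.
    by rewrite /next_clustering inE (fintype.subsetP SC) //= h.
  move=> /fintype.subsetP h; rewrite in_setE /= => A AS.
  by have := h A AS; rewrite /next_clustering finset.in_set => /andP[_]; rewrite in_setE.
have mFs : forall S : {set {set 'I_n}}, S \subset C -> measurable (Fs S).
  move=> S SC.
  have -> : Fs S = \bigcap_(A in [set A | A \in S]) E A.
    by apply/seteqP; split => x /= h A AS; [rewrite -in_setE; exact: h|rewrite in_setE; exact: h].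
  apply: fin_bigcap_measurable; first exact: finite_finset.
  by move=> A /= AS; apply: mE; exact: (fintype.subsetP SC).
have nC : forall x, next_clustering C E x \subset C.
  by move=> x; apply/fintype.subsetP => A; rewrite /next_clustering inE => /andP[].
set G := [set x | (b <= _)%R].
have GE : G = \bigcup_(D in [set D : {set {set 'I_n}} | D \subset C /\ b <= #|D|%:R]) Fs D.
  apply/seteqP; split => x /=.
    move=> hx; exists (next_clustering C E x) => //.
    by rewrite -in_setE memF.
  move=> [D [DC bD]]; rewrite -in_setE memF // => Dx.
  by apply: le_trans bD _; rewrite ler_nat subset_leq_card.
have mG : measurable G.
  rewrite GE; apply: fin_bigcup_measurable; first exact: finite_finset.
  by move=> D [DC _]; exact: mFs.
set J := [set S : {set {set 'I_n}} | S \subset C & #|S| == t]%SET.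
set Pi := \prod_(j < t) (b - j%:R).
have Pi0 : 0 < Pi.
  rewrite /Pi; apply: prodr_gt0 => j _; rewrite subr_gt0.
  by apply: lt_le_trans hbt; rewrite ltr_nat.
have tf0 : (0 : R) < t`!%:R by rewrite ltr0n fact_gt0.
set c := Pi / t`!%:R.
have c0 : 0 <= c by rewrite /c divr_ge0 // ltW.
have hcount : forall x, G x -> c <= \sum_(S in J) \1_(Fs S) x.
  move=> x Gx.
  have -> : \sum_(S in J) \1_(Fs S) x = ('C(#|next_clustering C E x|, t))%:R :> R.
    rewrite -cards_draws.
    transitivity (\sum_(S in J) (if S \subset next_clustering C E x then (1:R) else 0)).
      apply: eq_bigr => S; rewrite finset.in_set => /andP[SC _]; rewrite indicE memF //.
      by case: (_ \subset _).
    rewrite -big_mkcondr /= sumr_const; congr (_ *+ _); apply: eq_card => S.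
    rewrite unfold_in /= /J !finset.in_set; case SX: (S \subset next_clustering C E x); first by rewrite andbT (fintype.subset_trans SX (nC x)).
    by rewrite andbF.
  rewrite /c ler_pdivrMr // -natrM bin_ffact; exact: ffact_lb.
have hsum : (\sum_(S in J) P (Fs S) = ('C(m, t)%:R * p ^+ t)%:E)%E.
  rewrite (eq_bigr (fun _ => (p ^+ t)%:E)); last first.
    move=> S; rewrite inE => /andP[SC /eqP St].
    rewrite /Fs hind //; last by rewrite St.
    congr EFin; rewrite (eq_bigr (fun _ => p)); first by rewrite prodr_const St.
    by move=> A AS; rewrite hP ?(fintype.subsetP SC A AS).
  by rewrite sumEFin sumr_const /J cards_draws mulr_natl.
have mFJ : forall S, S \in J -> measurable (Fs S).
  by move=> S; rewrite finset.in_set => /andP[SC _]; exact: mFs.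
have hmk := @markov_count _ _ _ P _ J Fs G c mFJ mG c0 hcount.
have {}hmk : (c%:E * P G <= \sum_(S in J) P (Fs S))%E by exact: hmk.
rewrite hsum in hmk.
have PG0 : (0 <= P G)%E by apply: measure_ge0.
have PG1 : (P G <= 1)%E by apply: probability_le1.
move: hmk PG0 PG1; case: (P G) => [g| |] hmk PG0 PG1; last 2 first.
- by [].
- by [].
rewrite lte_fin; rewrite lee_fin in PG0; rewrite lee_fin in PG1.
rewrite -EFinM lee_fin in hmk.
rewrite /= in hC.
set q := 1 + δ / 2.
have q0 : 0 <= q by rewrite /q addr_ge0 // divr_ge0.
have hq : 2 < q ^+ t.
  apply: (lt_le_trans _ (@bernoulli_ineq R (δ / 2) t _)); last by rewrite divr_ge0.
  have : (2 * r < t)%N by rewrite /t /r; clear -hik'; lia.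
  rewrite -(ltr_nat R) natrM => h.
  have : 2 < t%:R * δ.
    by rewrite /δ ltr_pdivlMr //.
  move=> h5; clear -h5; lra.
have key : (m ^_ t)%:R * p ^+ t * q ^+ t <= Pi.
  have e : \prod_(j < t) (((m - j)%N)%:R * p * q) = (m ^_ t)%:R * p ^+ t * q ^+ t.
    by rewrite !big_split /= ffact_prod !prodr_const card_ord.
  rewrite -e; apply: ler_prod => j _; apply/andP; split.
    by rewrite mulr_ge0 // mulr_ge0.
  have h1 : ((m - j)%N%:R * p) <= μ.
    rewrite /μ; apply: ler_wpM2r => //; apply: le_trans hC.
    by rewrite ler_nat leq_subr.
  have h2 : (m - j)%N%:R * p * q <= μ * q by apply: ler_wpM2r.
  have jt : (j%:R : R) <= t%:R by rewrite ler_nat ltnW.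
  rewrite /b hb -/μ; apply: le_trans h2 _; rewrite /q.
  clear -hμδ jt; lra.
have h3 : Pi * g <= (m ^_ t)%:R * p ^+ t.
  move: hmk; rewrite /c mulrAC ler_pdivrMr // => h.
  by rewrite -bin_ffact natrM mulrAC.
have h4 : Pi * (g * q ^+ t) <= Pi * 1.
  rewrite mulr1 mulrA; apply: le_trans key.
  by apply: ler_wpM2r => //; apply: exprn_ge0.
rewrite ler_pM2l // in h4.
clear -h4 hq PG0; nra.
Qed.

Lemma part2 (R : realType) :
  (exists (c : R) (N : nat), 0 < c /\ forall n : nat, (N <= n)%N ->
    forall k : nat, (1 <= k)%N -> (k%:R <= log2 (n%:R : R) / 2) ->
    xi (R:=R) n * alpha k (k - 1) * (n%:R `^ (k%:R)^-1)
      <= c * (k%:R * (n%:R `^ (k%:R)^-1) * log2 (n%:R))).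
Proof.
exists (4 * expR (3^-1)), 1%N; split.
  by rewrite mulr_gt0 // expR_gt0.
move=> n hn k hk hlog.
have hn0 : (0 : R) < n%:R by rewrite ltr0n.
have l0 : 0 < ln (2 : R) by apply: ln_gt0; lra.
have ha : alpha (R:=R) k (k - 1) = k%:R.
  have := @alpha_closed R k (k - 1) ltac:(lia).
  by rewrite subKn // mulr1.
have hl2 : log2 (2 * n%:R : R) = 1 + log2 n%:R.
  rewrite /log2 lnM ?posrE // mulrDl divff //; exact: lt0r_neq0.
have hy : 2 <= log2 (n%:R : R).
  move: hlog; rewrite ler_pdivlMr // => hlog; apply: le_trans hlog.
  by rewrite -{1}(mul1r 2) ler_wpM2r // ler1n.
rewrite ha /xi hl2.
set e := expR _; set P := _ `^ _; set y := log2 _.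
have e0 : 0 <= e by apply: ltW; apply: expR_gt0.
have P0 : 0 <= P by apply: powR_ge0.
have Z0 : 0 <= e * k%:R * P by rewrite !mulr_ge0.
have -> : e * (2 * (1 + y)) * k%:R * P = (e * k%:R * P) * (2 * (1 + y)) by ring.
have -> : 4 * e * (k%:R * P * y) = (e * k%:R * P) * (4 * y) by ring.
apply: ler_wpM2l => //; rewrite /y; lra.
Qed.

Theorem lemma8 (R : realType) :
  (exists N : nat, forall n : nat, (N <= n)%N ->
    forall k : nat, (1 <= k)%N -> (k%:R <= log2 (n%:R : R) / 2) ->
    forall i : nat, (1 <= i)%N -> (i <= k - 1)%N ->
    forall (C : {set {set 'I_n}}), clustering C ->
    (#|C|%:R <= bound (R:=R) n k i.-1) ->
    forall (dT : measure_display) (T : measurableType dT) (P : probability T R)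
           (E : {set 'I_n} -> set T),
      (forall A, A \in C -> measurable (E A)) ->
      (forall A, A \in C -> P (E A) = (n%:R `^ (- (k%:R)^-1))%:E) ->
      dwise_indep P C E (dpar n) ->
      (P [set x | (bound (R:=R) n k i <= #|next_clustering C E x|%:R)%R] < (2^-1)%:E)%E)
  /\
  (exists (c : R) (N : nat), 0 < c /\ forall n : nat, (N <= n)%N ->
    forall k : nat, (1 <= k)%N -> (k%:R <= log2 (n%:R : R) / 2) ->
    xi (R:=R) n * alpha k (k - 1) * (n%:R `^ (k%:R)^-1)
      <= c * (k%:R * (n%:R `^ (k%:R)^-1) * log2 (n%:R))).
Proof.
split; last exact: part2.
exists 1%N => n hn k hk hlog i hi1 hik C _ hC dT T P E mE hP hind.
exact: part1.
Qed.
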